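(* For any integers $k>n\geq 1$, the following identity holds in $\mathbb{R}[t]$: \[ \sum_{\substack{k_1\geq 2,\ k_2,\ldots,k_n\geq 1,\\ k_1+\cdots+k_n=k}}\zeta^t(k_1,\ldots,k_n) =\Biggl(\sum_{j=0}^{n-1}\binom{k-1}{j}t^j(1-t)^{n-1-j}\Biggr)\zeta(k). \]
   Context: For integers $k_1\geq 2$, $k_2,\ldots,k_n\geq 1$, the multiple zeta value is $\zeta(k_1,\ldots,k_n)=\sum_{m_1>\cdots>m_n>0}m_1^{-k_1}\cdots m_n^{-k_n}$. For such an index, let $\mathbf{p}$ run over all $2^{n-1}$ indices of the form $(k_1\square k_2\square\cdots\square k_n)$ where each $\square$ is filled either by a comma or by a plus sign (plus signs meaning the adjacent entries are added), and let $\sigma(\mathbf{p})$ be the number of plus signs used. Define the polynomial $\zeta^t(k_1,\ldots,k_n)=\sum_{\mathbf{p}}t^{\sigma(\mathbf{p})}\zeta(\mathbf{p})\in\mathbb{R}[t]$ in an indeterminate $t$ (so $\zeta^0$ is the multiple zeta value and $\zeta^1$ the multiple zeta-star value $\sum_{m_1\geq\cdots\geq m_n>0}m_1^{-k_1}\cdots m_n^{-k_n}$). *)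

(* Defs.v *)
From Stdlib Require Import Reals List Arith ClassicalEpsilon.
Import ListNotations.
Open Scope R_scope.

Fixpoint sumR (n : nat) (f : nat -> R) : R :=
  match n with
  | O => 0
  | S n' => sumR n' f + f (S n')
  end.

(* Truncated multiple zeta sum over N >= m1 > m2 > ... > mn > 0. *)
Fixpoint mzv_trunc (ks : list nat) (N : nat) : R :=
  match ks with
  | [] => 1
  | k :: ks' => sumR N (fun m => / (INR m) ^ k * mzv_trunc ks' (m - 1))
  end.

(* Limit of a sequence if it converges (0 otherwise). *)
Definition lim_or0 (u : nat -> R) : R :=
  match excluded_middle_informative (exists l, Un_cv u l) with
  | left H => proj1_sig (constructive_indefinite_description _ H)
  | right _ => 0
  end.

(* Multiple zeta value zeta(k1,...,kn) (convergent for k1 >= 2). *)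
Definition mzv (ks : list nat) : R := lim_or0 (mzv_trunc ks).

(* All indices (k1 [] k2 [] ... [] kn), each [] a comma or a plus,
   paired with the number of plus signs used. *)
Fixpoint merges (ks : list nat) : list (list nat * nat) :=
  match ks with
  | [] => [([], O)]
  | k :: ks' =>
      match ks' with
      | [] => [([k], O)]
      | _ => flat_map (fun ps =>
               match fst ps with
               | [] => []
               | q :: qs => [(k :: q :: qs, snd ps); ((k + q)%nat :: qs, S (snd ps))]
               end) (merges ks')
      end
  end.

Definition sum_list (l : list R) : R := fold_right Rplus 0 l.

(* zeta^t(k1,...,kn) evaluated at t. *)
Definition zeta_t (t : R) (ks : list nat) : R :=
  sum_list (map (fun ps => t ^ (snd ps) * mzv (fst ps)) (merges ks)).

Fixpoint comps (n k : nat) : list (list nat) :=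
  match n with
  | O => if Nat.eqb k 0 then [[]] else []
  | S n' => flat_map (fun a => map (cons a) (comps n' (k - a))) (seq 1 k)
  end.

Definition adm_comps (n k : nat) : list (list nat) :=
  filter (fun ks => match ks with [] => false | k1 :: _ => Nat.leb 2 k1 end)
         (comps n k).

(* Main.v *)
Require Import Defs.
From Stdlib Require Import Reals List Arith ClassicalEpsilon Lra Lia.
Import ListNotations.
Open Scope R_scope.
From Coquelicot Require Rcomplements Rbar Lim_seq Series Hierarchy.

Lemma sumR_ext n f g : (forall m, (1 <= m <= n)%nat -> f m = g m) -> sumR n f = sumR n g.
Proof. induction n; simpl; intros H; auto. rewrite IHn by (intros; apply H; lia). rewrite H by lia. auto. Qed.

Lemma sumR_plus n f g : sumR n (fun m => f m + g m) = sumR n f + sumR n g.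
Proof. induction n; simpl; [lra|]. rewrite IHn; lra. Qed.

Lemma sumR_scal n c f : sumR n (fun m => c * f m) = c * sumR n f.
Proof. induction n; simpl; [lra|]. rewrite IHn; lra. Qed.

Lemma sumR_minus n f g : sumR n (fun m => f m - g m) = sumR n f - sumR n g.
Proof. induction n; simpl; [lra|]. rewrite IHn; lra. Qed.

Lemma sumR_zero n f : (forall m, (1 <= m <= n)%nat -> f m = 0) -> sumR n f = 0.
Proof. intros H. rewrite (sumR_ext n f (fun _ => 0)); auto. clear H. induction n; simpl; auto. rewrite IHn; lra. Qed.

Lemma sumR_shift n f : sumR (S n) f = f 1%nat + sumR n (fun m => f (S m)).
Proof. induction n. simpl; lra. change (sumR (S (S n)) f) with (sumR (S n) f + f (S (S n))). rewrite IHn. simpl. lra. Qed.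

Lemma sumR_nonneg n f : (forall m, (1 <= m <= n)%nat -> 0 <= f m) -> 0 <= sumR n f.
Proof. induction n; simpl; intros H; [lra|]. assert (0 <= f (S n)) by (apply H; lia).
  assert (0 <= sumR n f) by (apply IHn; intros; apply H; lia). lra. Qed.

Lemma sumR_le n f g : (forall m, (1 <= m <= n)%nat -> f m <= g m) -> sumR n f <= sumR n g.
Proof. induction n; simpl; intros H; [lra|]. assert (f (S n) <= g (S n)) by (apply H; lia).
  assert (sumR n f <= sumR n g) by (apply IHn; intros; apply H; lia). lra. Qed.

Lemma sumR_swap a b F : sumR a (fun i => sumR b (fun j => F i j)) = sumR b (fun j => sumR a (fun i => F i j)).
Proof. induction a; simpl. - symmetry; apply sumR_zero; auto.
  - rewrite IHa, <- sumR_plus. reflexivity. Qed.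

Lemma sumR_mono n m f : (forall i, 0 <= f i) -> (n <= m)%nat -> sumR n f <= sumR m f.
Proof. intros H Hnm. induction Hnm; simpl; [lra|]. specialize (H (S m)). lra. Qed.

Lemma sumR_add n k f : sumR (n + k) f = sumR n f + sumR k (fun i => f (n + i)%nat).
Proof. induction k; simpl. rewrite Nat.add_0_r; lra. rewrite Nat.add_succ_r. simpl. rewrite IHk. lra. Qed.

Lemma sumR_single_le n f m : (forall i, 0 <= f i) -> (1 <= m <= n)%nat -> f m <= sumR n f.
Proof. intros H Hm. induction n; [lia|]. simpl. destruct (Nat.eq_dec m (S n)).
  subst. assert (0 <= sumR n f) by (apply sumR_nonneg; auto). lra.
  assert (f m <= sumR n f) by (apply IHn; lia). specialize (H (S n)); lra. Qed.

Lemma sum_list_app l1 l2 : sum_list (l1 ++ l2) = sum_list l1 + sum_list l2.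
Proof. induction l1; simpl; [lra|]. rewrite IHl1; lra. Qed.

Lemma sum_list_map_plus {A} (f g : A -> R) l :
  sum_list (map (fun a => f a + g a) l) = sum_list (map f l) + sum_list (map g l).
Proof. induction l; simpl; [lra|]. rewrite IHl; lra. Qed.

Lemma sum_list_map_scal {A} c (f : A -> R) l :
  sum_list (map (fun a => c * f a) l) = c * sum_list (map f l).
Proof. induction l; simpl; [lra|]. rewrite IHl; lra. Qed.

Lemma sum_list_map_ext {A} (f g : A -> R) l : (forall a, In a l -> f a = g a) ->
  sum_list (map f l) = sum_list (map g l).
Proof. induction l; simpl; intros H; auto. rewrite H, IHl; auto. Qed.

Lemma sum_list_map_zero {A} (f : A -> R) l : (forall a, In a l -> f a = 0) -> sum_list (map f l) = 0.
Proof. induction l; simpl; intros H; auto. rewrite H, IHl; auto. lra. Qed.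

Lemma sum_list_flat_map {A B} (f : B -> R) (g : A -> list B) l :
  sum_list (map f (flat_map g l)) = sum_list (map (fun a => sum_list (map f (g a))) l).
Proof. induction l; simpl; auto. rewrite map_app, sum_list_app, IHl. auto. Qed.

Lemma sum_list_seq1 (f : nat -> R) n : sum_list (map f (seq 1 n)) = sumR n f.
Proof. induction n. reflexivity. rewrite seq_S, map_app, sum_list_app, IHn. simpl. lra. Qed.

Lemma sum_list_map_sumR {A} (F : nat -> A -> R) n l :
  sum_list (map (fun a => sumR n (fun m => F m a)) l) = sumR n (fun m => sum_list (map (F m) l)).
Proof. induction l; simpl. symmetry; apply sumR_zero; auto.
  rewrite IHl, <- sumR_plus. auto. Qed.

Lemma sum_list_nonneg l : (forall a, In a l -> 0 <= a) -> 0 <= sum_list l.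
Proof. induction l; simpl; intros H; [lra|]. assert (0<=a) by auto. assert (0 <= sum_list l) by auto. lra. Qed.

Lemma sum_list_map_le {A} (f g : A -> R) l : (forall a, In a l -> f a <= g a) ->
  sum_list (map f l) <= sum_list (map g l).
Proof. induction l; simpl; intros H; [lra|]. assert (f a <= g a) by auto.
  assert (sum_list (map f l) <= sum_list (map g l)) by auto. lra. Qed.

Lemma sum_list_map_single_le {A} (f : A -> R) l a : (forall b, In b l -> 0 <= f b) -> In a l ->
  f a <= sum_list (map f l).
Proof. induction l; simpl; intros H Ha; [contradiction|]. destruct Ha as [->|Ha].
  - assert (0 <= sum_list (map f l)) by (apply sum_list_nonneg; intros b Hb; apply in_map_iff in Hb;
      destruct Hb as [c [<- Hc]]; auto). lra.
  - assert (f a <= sum_list (map f l)) by auto. assert (0 <= f a0) by auto. lra. Qed.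

Definition inc (l : list nat) : list nat := match l with [] => [] | a :: l' => S a :: l' end.

Fixpoint binom (n k : nat) : nat :=
  match k with
  | O => 1%nat
  | S k' => match n with O => 0%nat | S n' => (binom n' k' + binom n' (S k'))%nat end
  end.

Section Comb.
Variable t : R.

Definition Phi (G : list nat -> R) (c : list nat) : R :=
  sum_list (map (fun ps => t ^ (snd ps) * G (fst ps)) (merges c)).

Definition Gshift (a : nat) (G : list nat -> R) (l : list nat) : R :=
  match l with [] => 0 | q :: qs => G (a :: q :: qs) + t * G ((a + q)%nat :: qs) end.

Definition Y (m w : nat) (G : list nat -> R) : R := sum_list (map G (comps m w)).
Definition X (n w : nat) (G : list nat -> R) : R := sum_list (map (Phi G) (comps n w)).

Definition mstep (a : nat) (ps : list nat * nat) : list (list nat * nat) :=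
  match fst ps with
  | [] => []
  | q :: qs => [(a :: q :: qs, snd ps); ((a + q)%nat :: qs, S (snd ps))]
  end.

Lemma merges_cons2 a b c : merges (a :: b :: c) = flat_map (mstep a) (merges (b :: c)).
Proof. reflexivity. Qed.

Lemma merges_inc c : merges (inc c) = map (fun ps => (inc (fst ps), snd ps)) (merges c).
Proof.
  destruct c as [|a c']; [reflexivity|].
  destruct c' as [|b c'']; [reflexivity|].
  change (inc (a :: b :: c'')) with (S a :: b :: c''). rewrite !merges_cons2.
  generalize (merges (b :: c'')). intros l. induction l as [|[p s] l IH]; [reflexivity|].
  simpl flat_map. rewrite map_app, IH. destruct p as [|q qs]; reflexivity.
Qed.

Lemma Phi_inc G c : Phi G (inc c) = Phi (fun p => G (inc p)) c.
Proof. unfold Phi. rewrite merges_inc, map_map. auto. Qed.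

Lemma merges_nonempty c : c <> [] -> forall ps, In ps (merges c) -> fst ps <> [].
Proof.
  induction c as [|a c' IH]; intros Hc ps Hin; [congruence|].
  destruct c' as [|b c'']. simpl in Hin. destruct Hin as [<-|[]]. simpl; congruence.
  rewrite merges_cons2 in Hin. apply in_flat_map in Hin. destruct Hin as [[p s] [_ Hin]].
  unfold mstep in Hin. simpl in Hin. destruct p; simpl in Hin. contradiction.
  destruct Hin as [<-|[<-|[]]]; simpl; congruence.
Qed.

Lemma Phi_cons G a c : c <> [] -> Phi G (a :: c) = Phi (Gshift a G) c.
Proof.
  intros Hc. unfold Phi. destruct c as [|b c'']; [congruence|].
  rewrite merges_cons2.
  rewrite sum_list_flat_map. apply sum_list_map_ext. intros [p s] Hin.
  unfold mstep. destruct p as [|q qs]; simpl; [lra|]. lra.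
Qed.

Lemma Phi_single G a : Phi G [a] = G [a].
Proof. unfold Phi; simpl. lra. Qed.

Lemma comps_S_0 n : comps (S n) 0 = [].
Proof. reflexivity. Qed.

Lemma comps_split n w : comps (S n) (S w) = map (cons 1%nat) (comps n w) ++ map inc (comps (S n) w).
Proof.
  change (comps (S n) (S w)) with (flat_map (fun a => map (cons a) (comps n (S w - a))) (seq 1 (S w))).
  rewrite <- cons_seq. simpl flat_map. f_equal.
  - rewrite Nat.sub_0_r; auto.
  - change (comps (S n) w) with (flat_map (fun a => map (cons a) (comps n (w - a))) (seq 1 w)).
    rewrite <- seq_shift. induction (seq 1 w) as [|a l IH]; [reflexivity|].
    simpl. rewrite map_app, IH, map_map. reflexivity.
Qed.

Lemma comps_small m : forall w, (w < m)%nat -> comps m w = [].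
Proof.
  induction m; intros w H; [lia|]. simpl.
  assert (Hall: forall a, In a (seq 1 w) -> comps m (w - a) = []).
  { intros a Ha. apply in_seq in Ha. apply IHm. lia. }
  induction (seq 1 w) as [|a l IH]; simpl; auto.
  rewrite Hall by (left; auto). simpl. apply IH. intros; apply Hall; right; auto.
Qed.

Lemma comps_head n w c : In c (comps (S n) w) -> exists a l, c = a :: l /\ (1 <= a)%nat.
Proof.
  simpl. intros H. apply in_flat_map in H. destruct H as [a [Ha Hc]].
  apply in_map_iff in Hc. destruct Hc as [l [<- _]]. apply in_seq in Ha. exists a, l; split; auto; lia.
Qed.

Lemma comps_0 w : comps 0 w = if Nat.eqb w 0 then [[]] else [].
Proof. reflexivity. Qed.

Lemma Y_split m w G : Y (S m) (S w) G = Y m w (fun p => G (1%nat :: p)) + Y (S m) w (fun p => G (inc p)).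
Proof. unfold Y. rewrite comps_split, map_app, sum_list_app, !map_map. auto. Qed.

Lemma Y_zero m w G : (w < m)%nat -> Y m w G = 0.
Proof. intros H. unfold Y. rewrite comps_small; auto. Qed.

Lemma Y_Gshift m w G : Y (S m) w (Gshift 1 G) =
  Y (S m) w (fun p => G (1%nat :: p)) + t * Y (S m) w (fun p => G (inc p)).
Proof.
  unfold Y. rewrite <- sum_list_map_scal, <- sum_list_map_plus. apply sum_list_map_ext.
  intros c Hc. apply comps_head in Hc. destruct Hc as [a [l [-> _]]]. reflexivity.
Qed.

Lemma X_split n w G : X (S n) (S w) G =
  (match n with O => Y 0 w (fun p => G (1%nat :: p)) | _ => X n w (Gshift 1 G) end)
  + X (S n) w (fun p => G (inc p)).
Proof.
  unfold X. rewrite comps_split, map_app, sum_list_app, !map_map. f_equal.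
  - destruct n as [|n'].
    + unfold Y. apply sum_list_map_ext. intros c Hc. rewrite comps_0 in Hc.
      destruct (Nat.eqb w 0); simpl in Hc; [|contradiction]. destruct Hc as [<-|[]].
      apply Phi_single.
    + apply sum_list_map_ext. intros c Hc. apply Phi_cons.
      apply comps_head in Hc. destruct Hc as [a [l [-> _]]]. congruence.
  - apply sum_list_map_ext. intros c _. apply Phi_inc.
Qed.


Lemma binom_0 n : binom n 0 = 1%nat.
Proof. destruct n; reflexivity. Qed.

Lemma Y0_val w G : Y 0 w G = if Nat.eqb w 0 then G [] else 0.
Proof. unfold Y. rewrite comps_0. destruct (Nat.eqb w 0); simpl; lra. Qed.

Lemma X_formula : forall w n G, (1 <= n)%nat ->
  X n w G = sumR n (fun m => t ^ (n - m) * INR (binom (w - m) (n - m)) * Y m w G).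
Proof.
  induction w as [|w IHw]; intros n G Hn.
  - destruct n; [lia|]. unfold X at 1. rewrite comps_S_0. simpl (sum_list (map _ [])).
    symmetry. apply sumR_zero. intros m Hm. rewrite Y_zero by lia. ring.
  - destruct n as [|n'']; [lia|]. rewrite X_split.
    rewrite (IHw (S n'') (fun p => G (inc p))) by lia.
    rewrite (sumR_ext (S n'') (fun m => t ^ (S n'' - m) * INR (binom (S w - m) (S n'' - m)) * Y m (S w) G) (fun m => t ^ (S n'' - m) * INR (binom (S w - m) (S n'' - m)) *
       Y (m - 1) w (fun p => G (1%nat :: p)) +
       t ^ (S n'' - m) * INR (binom (S w - m) (S n'' - m)) * Y m w (fun p => G (inc p)))).
    2:{ intros m Hm. destruct m as [|m']; [lia|]. rewrite Y_split. replace (S m' - 1)%nat with m' by lia. ring. }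
    rewrite sumR_plus.
    rewrite (sumR_shift n'' (fun m => t ^ (S n'' - m) * INR (binom (S w - m) (S n'' - m)) * Y (m - 1) w (fun p => G (1%nat :: p)))).
    replace (S n'' - 1)%nat with n'' by lia. replace (S w - 1)%nat with w by lia. replace (1 - 1)%nat with 0%nat by lia.
    assert (Hlast: forall f : nat -> R, sumR (S n'') f = sumR n'' f + f (S n'')) by (intros; reflexivity).
    rewrite (Hlast (fun m => t ^ (S n'' - m) * INR (binom (S w - m) (S n'' - m)) * Y m w (fun p => G (inc p)))).
    rewrite (Hlast (fun m => t ^ (S n'' - m) * INR (binom (w - m) (S n'' - m)) * Y m w (fun p => G (inc p)))).
    rewrite Nat.sub_diag, !binom_0. simpl (t ^ 0).
    destruct n'' as [|n3].
    + simpl sumR. rewrite !binom_0. simpl. lra.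
    + rewrite (IHw (S n3) (Gshift 1 G)) by lia.
      rewrite (sumR_ext (S n3) (fun m => t ^ (S n3 - m) * INR (binom (w - m) (S n3 - m)) * Y m w (Gshift 1 G)) (fun m => t ^ (S n3 - m) * INR (binom (w - m) (S n3 - m)) * Y m w (fun p => G (1%nat :: p))
          + t * (t ^ (S n3 - m) * INR (binom (w - m) (S n3 - m)) * Y m w (fun p => G (inc p))))).
      2:{ intros m Hm. destruct m as [|m']; [lia|]. rewrite Y_Gshift. ring. }
      rewrite sumR_plus.
      assert (E1: sumR (S n3) (fun m => t ^ (S (S n3) - S m) * INR (binom (S w - S m) (S (S n3) - S m)) * Y (S m - 1) w (fun p => G (1%nat :: p)))
                = sumR (S n3) (fun m => t ^ (S n3 - m) * INR (binom (w - m) (S n3 - m)) * Y m w (fun p => G (1%nat :: p)))).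
      { apply sumR_ext. intros m Hm. replace (S m - 1)%nat with m by lia. reflexivity. }
      rewrite E1.
      assert (E0: t ^ S n3 * INR (binom w (S n3)) * Y 0 w (fun p => G (1%nat :: p)) = 0).
      { rewrite Y0_val. destruct w; simpl; ring. }
      rewrite E0.
      assert (E2: sumR (S n3) (fun m => t * (t ^ (S n3 - m) * INR (binom (w - m) (S n3 - m)) * Y m w (fun p => G (inc p))))
         + sumR (S n3) (fun m => t ^ (S (S n3) - m) * INR (binom (w - m) (S (S n3) - m)) * Y m w (fun p => G (inc p)))
         = sumR (S n3) (fun m => t ^ (S (S n3) - m) * INR (binom (S w - m) (S (S n3) - m)) * Y m w (fun p => G (inc p)))).
      { rewrite <- sumR_plus. apply sumR_ext. intros m Hm.
        destruct (le_lt_dec m w) as [Hmw|Hmw].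
        - replace (S (S n3) - m)%nat with (S (S n3 - m)) by lia.
          replace (S w - m)%nat with (S (w - m)) by lia.
          change (binom (S (w - m)) (S (S n3 - m))) with (binom (w - m) (S n3 - m) + binom (w - m) (S (S n3 - m)))%nat. rewrite plus_INR. change (t ^ S (S n3 - m)) with (t * t ^ (S n3 - m)). ring.
        - rewrite Y_zero by lia. ring. }
      lra.
Qed.

Lemma filter_all {A} (f : A -> bool) l : (forall x, In x l -> f x = true) -> filter f l = l.
Proof. induction l; simpl; intros H; auto. rewrite H by auto. f_equal. apply IHl. intros; apply H; auto. Qed.

Lemma adm_comps_inc n k : adm_comps (S n) (S k) = map inc (comps (S n) k).
Proof.
  unfold adm_comps. rewrite comps_split, filter_app.
  assert (H1: forall l : list (list nat), filter (fun ks => match ks with [] => false | k1 :: _ => Nat.leb 2 k1 end)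
             (map (cons 1%nat) l) = []).
  { induction l; simpl; auto. }
  rewrite H1. cbn [app].
  apply filter_all. intros c Hc. apply in_map_iff in Hc. destruct Hc as [c' [<- Hc']].
  apply comps_head in Hc'. destruct Hc' as [a [l' [-> Ha]]]. simpl. destruct a; [lia|]. reflexivity.
Qed.

End Comb.

Lemma LHS_reduce t n k G : (1 <= n)%nat -> (1 <= k)%nat ->
  sum_list (map (Phi t G) (adm_comps n k)) =
  sumR n (fun m => t ^ (n - m) * INR (binom (k - 1 - m) (n - m)) * sum_list (map G (adm_comps m k))).
Proof.
  intros Hn Hk. destruct n as [|n']; [lia|]. destruct k as [|k']; [lia|].
  rewrite adm_comps_inc, map_map.
  rewrite (sum_list_map_ext _ (Phi t (fun p => G (inc p)))) by (intros; apply Phi_inc).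
  change (sum_list (map (Phi t (fun p => G (inc p))) (comps (S n') k'))) with (X t (S n') k' (fun p => G (inc p))).
  rewrite X_formula by lia. replace (S k' - 1)%nat with k' by lia.
  apply sumR_ext. intros m Hm. destruct m as [|m']; [lia|].
  rewrite adm_comps_inc, map_map. reflexivity.
Qed.

Section Poly.
Variable t : R.
Variable K : nat.
Definition Tc (n m : nat) : R := t ^ (n - m) * INR (binom (K - m) (n - m)).

Lemma binom_pascal a b : binom (S a) (S b) = (binom a b + binom a (S b))%nat.
Proof. reflexivity. Qed.

Lemma Tc_rec n m : (1 <= m <= n)%nat -> (n <= K)%nat -> Tc (S n) m = Tc n (m - 1) - t * Tc n m.
Proof.
  intros Hm Hn. unfold Tc.
  replace (S n - m)%nat with (S (n - m)) by lia.
  replace (n - (m - 1))%nat with (S (n - m)) by lia.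
  replace (K - (m - 1))%nat with (S (K - m)) by lia.
  rewrite binom_pascal, plus_INR. simpl (t ^ S _). ring.
Qed.

Lemma binom_diag_gt a : binom a 0 = 1%nat. Proof. apply binom_0. Qed.

Lemma Tc_diag n : Tc n n = 1.
Proof. unfold Tc. rewrite Nat.sub_diag, binom_0. simpl. lra. Qed.

Lemma Tc_0 n : Tc n 0 = t ^ n * INR (binom K n).
Proof. unfold Tc. rewrite !Nat.sub_0_r. auto. Qed.

Lemma P_rec n : (1 <= n)%nat -> (n <= K)%nat ->
  sumR (S n) (Tc (S n)) = (1 - t) * sumR n (Tc n) + t ^ n * INR (binom K n).
Proof.
  intros H1 H2.
  change (sumR (S n) (Tc (S n))) with (sumR n (Tc (S n)) + Tc (S n) (S n)).
  rewrite (sumR_ext n (Tc (S n)) (fun m => Tc n (m - 1) - t * Tc n m)) by (intros; apply Tc_rec; lia).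
  rewrite sumR_minus, sumR_scal.
  destruct n as [|n0]; [lia|].
  rewrite sumR_shift. replace (1 - 1)%nat with 0%nat by lia.
  rewrite (sumR_ext n0 (fun m => Tc (S n0) (S m - 1)) (Tc (S n0))) by (intros; f_equal; lia).
  change (sumR (S n0) (Tc (S n0))) with (sumR n0 (Tc (S n0)) + Tc (S n0) (S n0)).
  rewrite !Tc_diag, Tc_0. ring.
Qed.
End Poly.

Lemma binom_gt n : forall k, (n < k)%nat -> binom n k = 0%nat.
Proof. induction n; intros k Hk; destruct k as [|k']; try lia; auto.
  simpl. rewrite !IHn by lia. auto. Qed.

Lemma C_0 n : C n 0 = 1.
Proof. unfold C. rewrite Nat.sub_0_r. simpl (fact 0). simpl INR. field. apply INR_fact_neq_0. Qed.

Lemma C_diag n : C n n = 1.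
Proof. unfold C. rewrite Nat.sub_diag. simpl (fact 0). simpl INR. field. apply INR_fact_neq_0. Qed.

Lemma binom_C n k : (k <= n)%nat -> INR (binom n k) = C n k.
Proof.
  revert k; induction n; intros k Hk.
  - destruct k; [|lia]. rewrite C_0. reflexivity.
  - destruct k as [|k'].
    + rewrite binom_0, C_0. reflexivity.
    + rewrite binom_pascal, plus_INR. destruct (Nat.eq_dec k' n).
      * subst. rewrite IHn by lia. rewrite binom_gt by lia. rewrite !C_diag. simpl. lra.
      * rewrite !IHn by lia. apply pascal. lia.
Qed.

Lemma poly_identity t K : forall n, (1 <= n)%nat -> (n <= K)%nat ->
  sumR n (Tc t K n) = sum_f_R0 (fun j => C K j * t ^ j * (1 - t) ^ (n - 1 - j)) (n - 1).
Proof.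
  intros n Hn. induction Hn as [|n Hn IH]; intros HK.
  - simpl. unfold Tc. simpl. rewrite binom_0, C_0. simpl. ring.
  - rewrite P_rec by lia. rewrite IH by lia.
    replace (S n - 1)%nat with (S (n - 1)) by lia. rewrite tech5.
    replace (S (n - 1)) with n by lia. rewrite binom_C by lia.
    rewrite Nat.sub_diag.
    rewrite (sum_eq (fun j => C K j * t ^ j * (1 - t) ^ (n - j))
                    (fun j => (C K j * t ^ j * (1 - t) ^ (n - 1 - j)) * (1 - t))).
    + rewrite <- scal_sum. simpl (_ ^ 0). ring.
    + intros j Hj. replace (n - j)%nat with (S (n - 1 - j)) by lia. simpl. ring.
Qed.

Module Analysis.
Import Rcomplements Rbar Lim_seq Series Hierarchy.

Lemma series_lim a l : is_series a l <-> is_lim_seq (fun n => sum_f_R0 a n) l.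
Proof. rewrite is_series_Reals, is_lim_seq_Reals. unfold infinite_sum, Un_cv. tauto. Qed.

Lemma isR_plus a b la lb : is_series a la -> is_series b lb -> is_series (fun n => a n + b n) (la + lb).
Proof. intros Ha Hb. exact (is_series_plus a b la lb Ha Hb). Qed.

Lemma isR_scal c a la : is_series a la -> is_series (fun n => c * a n) (c * la).
Proof. intros Ha. exact (is_series_scal_l c a la Ha). Qed.

Lemma isR_ext (a b : nat -> R) (l : R) : (forall n, a n = b n) -> is_series a l -> is_series b l.
Proof. intros H Hs. exact (is_series_ext a b l H Hs). Qed.

Lemma isR_zero : is_series (fun _ => 0) 0.
Proof. apply series_lim. apply is_lim_seq_ext with (fun _ => 0). intros n. induction n; [simpl; lra|]. rewrite tech5, <- IHn. simpl. lra.
  apply is_lim_seq_const. Qed.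

Lemma isR_delta c : is_series (fun n => if Nat.eqb n 0 then c else 0) c.
Proof. apply series_lim. apply is_lim_seq_ext with (fun _ => c). intros n. induction n; [simpl; lra|]. rewrite tech5, <- IHn. simpl. lra.
  apply is_lim_seq_const. Qed.

Lemma is_series_sumR M (F : nat -> nat -> R) (s : nat -> R) :
  (forall m, (1 <= m <= M)%nat -> is_series (F m) (s m)) ->
  is_series (fun h => sumR M (fun m => F m h)) (sumR M s).
Proof.
  induction M; intros H; simpl.
  - apply isR_zero.
  - apply isR_plus. apply IHM. intros; apply H; lia. apply H; lia.
Qed.

Lemma isR_mult_nonneg a b la lb : (forall n, 0 <= a n) -> (forall n, 0 <= b n) ->
  is_series a la -> is_series b lb ->
  is_series (fun n => sum_f_R0 (fun k => a k * b (n - k)%nat) n) (la * lb).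
Proof.
  intros Ha Hb Hsa Hsb. apply is_series_mult; auto.
  - exists la. apply isR_ext with a; auto. intros n. rewrite Rabs_pos_eq; auto.
  - exists lb. apply isR_ext with b; auto. intros n. rewrite Rabs_pos_eq; auto.
Qed.

Lemma partial_le a l : (forall n, 0 <= a n) -> is_series a l -> forall n, sum_f_R0 a n <= l.
Proof. intros Ha Hs n. apply series_lim in Hs. apply (is_lim_seq_incr_compare _ _ Hs).
  intros k. simpl. specialize (Ha (S k)). lra. Qed.

Lemma term_le a l : (forall n, 0 <= a n) -> is_series a l -> forall n, a n <= l.
Proof. intros Ha Hs n. pose proof (partial_le a l Ha Hs n). destruct n. simpl in H; auto.
  simpl in H. assert (0 <= sum_f_R0 a n) by (apply cond_pos_sum; auto). lra. Qed.

Lemma sum_f_lim H (u : nat -> nat -> R) (l : nat -> R) :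
  (forall h, is_lim_seq (fun N => u N h) (l h)) ->
  is_lim_seq (fun N => sum_f_R0 (u N) H) (sum_f_R0 l H).
Proof. induction H; intros Hl; simpl; auto. apply is_lim_seq_plus'; auto. Qed.

Lemma series_MCT (a : nat -> nat -> R) (al : nat -> R) (F : nat -> R) (Fl : R) :
  (forall N h, 0 <= a N h) -> (forall N h, a N h <= a (S N) h) ->
  (forall h, is_lim_seq (fun N => a N h) (al h)) ->
  (forall N, is_series (a N) (F N)) -> is_lim_seq F Fl -> is_series al Fl.
Proof.
  intros Hpos Hinc Hlim Hser HF.
  assert (Hal: forall N h, a N h <= al h).
  { intros N h. apply (is_lim_seq_incr_compare (fun N => a N h)); auto. }
  assert (Halpos: forall h, 0 <= al h). { intros h. specialize (Hal 0%nat h). specialize (Hpos 0%nat h). lra. }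
  assert (HFinc: forall N, F N <= F (S N)).
  { intros N. assert (Hl: Rbar_le (F N) (F (S N))).
    { apply is_lim_seq_le with (u := fun n => sum_f_R0 (a N) n) (v := fun n => sum_f_R0 (a (S N)) n).
      intros n. apply sum_Rle. intros; auto. apply series_lim; auto. apply series_lim; auto. }
    exact Hl. }
  assert (HFl: forall N, F N <= Fl) by (apply is_lim_seq_incr_compare; auto).
  assert (Hps: forall H, sum_f_R0 al H <= Fl).
  { intros H. assert (Hl: Rbar_le (sum_f_R0 al H) Fl).
    { apply is_lim_seq_le with (u := fun N => sum_f_R0 (a N) H) (v := F); auto.
      intros N. pose proof (partial_le (a N) (F N) (Hpos N) (Hser N) H). pose proof (HFl N). lra.
      apply sum_f_lim; auto. }
    exact Hl. }
  assert (Hex: ex_finite_lim_seq (fun H => sum_f_R0 al H)).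
  { apply ex_finite_lim_seq_incr with Fl; auto. intros n. simpl. specialize (Halpos (S n)). lra. }
  destruct Hex as [S HS].
  assert (S <= Fl).
  { assert (Hl: Rbar_le S Fl). apply is_lim_seq_le with (u := fun H => sum_f_R0 al H) (v := fun _ => Fl); auto.
    apply is_lim_seq_const. exact Hl. }
  assert (Fl <= S).
  { assert (HFS: forall N, F N <= S).
    { intros N. assert (Hl: Rbar_le (F N) S).
      { apply is_lim_seq_le with (u := fun n => sum_f_R0 (a N) n) (v := fun n => sum_f_R0 al n); auto.
        intros n. apply sum_Rle. intros; auto. apply series_lim; auto. }
      exact Hl. }
    assert (Hl: Rbar_le Fl S). apply is_lim_seq_le with (u := F) (v := fun _ => S); auto.
    apply is_lim_seq_const. exact Hl. }
  apply series_lim. replace Fl with S by lra. auto.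
Qed.

Lemma INR_S_ge1c m : 1 <= INR (S m).
Proof. rewrite S_INR. pose proof (pos_INR m). lra. Qed.

Lemma lim_inv_S' : is_lim_seq (fun N => / INR (S N)) 0.
Proof.
  apply (is_lim_seq_inv (fun N => INR (S N)) p_infty).
  apply -> (is_lim_seq_incr_1 INR). apply is_lim_seq_INR. simpl. congruence.
Qed.

Lemma pow_le1 y k : 0 <= y <= 1 -> y ^ k <= 1.
Proof. intros H. induction k; simpl; [lra|]. assert (0 <= y ^ k) by (apply pow_le; lra). nra. Qed.

Lemma pseries_unique (a b : nat -> R) (Sx : R -> R) :
  (forall h, 0 <= a h) -> (forall h, 0 <= b h) ->
  (forall x, 0 < x <= /2 -> is_series (fun h => a h * x ^ h) (Sx x)) ->
  (forall x, 0 < x <= /2 -> is_series (fun h => b h * x ^ h) (Sx x)) ->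
  forall h, a h = b h.
Proof.
  intros Ha Hb HA HB.
  assert (Hmain: forall h, (forall i, (i < h)%nat -> a i = b i) -> a h = b h).
  { intros h IH.
    set (T := Sx (/2) + Sx (/2)).
    assert (HPT: forall H, sum_f_R0 (fun i => (a i + b i) * (/2) ^ i) H <= T).
    { intros H. assert (Hh: 0 < /2 <= /2) by lra.
      pose proof (partial_le _ _ (fun n => Rmult_le_pos _ _ (Ha n) (pow_le (/2) n ltac:(lra))) (HA _ Hh) H).
      pose proof (partial_le _ _ (fun n => Rmult_le_pos _ _ (Hb n) (pow_le (/2) n ltac:(lra))) (HB _ Hh) H).
      unfold T. rewrite (sum_eq _ (fun i => a i * (/2)^i + b i * (/2)^i)) by (intros; ring).
      rewrite plus_sum. lra. }
    assert (HK: forall x, 0 < x <= /2 -> forall k,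
      Rabs (sum_f_R0 (fun i => (a i - b i) * x ^ i) (h + k) - (a h - b h) * x ^ h)
        <= (2 * x) ^ (S h) * sum_f_R0 (fun i => (a i + b i) * (/2) ^ i) (h + k)).
    { intros x Hx k. assert (H2x: 0 < 2 * x <= 1) by lra.
      assert (HP0: forall H, 0 <= sum_f_R0 (fun i => (a i + b i) * (/2) ^ i) H).
      { intros H. apply cond_pos_sum. intros n. apply Rmult_le_pos. specialize (Ha n); specialize (Hb n); lra.
        apply pow_le; lra. }
      induction k.
      - rewrite Nat.add_0_r. destruct h as [|h'].
        + replace (sum_f_R0 (fun i => (a i - b i) * x ^ i) 0) with ((a 0%nat - b 0%nat) * x ^ 0) by reflexivity. rewrite Rminus_diag, Rabs_R0. apply Rmult_le_pos. apply pow_le; lra. apply HP0.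
        + rewrite tech5. rewrite sum_eq_R0.
          * rewrite Rplus_0_l, Rminus_diag, Rabs_R0. apply Rmult_le_pos. apply pow_le; lra. apply HP0.
          * intros i Hi. rewrite IH by lia. ring.
      - replace (h + S k)%nat with (S (h + k)) by lia. rewrite !tech5.
        set (D := sum_f_R0 (fun i => (a i - b i) * x ^ i) (h + k)) in *.
        set (P := sum_f_R0 (fun i => (a i + b i) * (/2) ^ i) (h + k)) in *.
        set (n := S (h + k)).
        assert (Hxn: x ^ n <= (2 * x) ^ S h * (/2) ^ n).
        { replace (x ^ n) with ((2 * x) ^ n * (/2) ^ n) by (rewrite <- Rpow_mult_distr; f_equal; field).
          apply Rmult_le_compat_r. apply pow_le; lra.
          replace n with (S h + k)%nat by (unfold n; lia). rewrite pow_add.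
          assert (0 <= (2 * x) ^ S h) by (apply pow_le; lra).
          pose proof (pow_le1 (2 * x) k ltac:(lra)). nra. }
        assert (Hc: Rabs ((a n - b n) * x ^ n) <= (a n + b n) * x ^ n).
        { rewrite Rabs_mult, (Rabs_pos_eq (x ^ n)) by (apply pow_le; lra).
          apply Rmult_le_compat_r. apply pow_le; lra. specialize (Ha n); specialize (Hb n).
          apply Rabs_le; lra. }
        assert (Hab: 0 <= a n + b n) by (specialize (Ha n); specialize (Hb n); lra).
        replace (D + (a n - b n) * x ^ n - (a h - b h) * x ^ h) with ((D - (a h - b h) * x ^ h) + (a n - b n) * x ^ n) by ring.
        eapply Rle_trans. apply Rabs_triang.
        assert ((a n + b n) * x ^ n <= (2 * x) ^ S h * ((a n + b n) * (/2) ^ n)).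
        { replace ((2 * x) ^ S h * ((a n + b n) * (/2) ^ n)) with ((a n + b n) * ((2 * x) ^ S h * (/2) ^ n)) by ring.
          apply Rmult_le_compat_l; auto. }
        rewrite Rmult_plus_distr_l. lra. }
    assert (Hbound: forall x, 0 < x <= /2 -> Rabs ((a h - b h) * x ^ h) <= (2 * x) ^ (S h) * T).
    { intros x Hx.
      assert (HD: is_lim_seq (fun k => sum_f_R0 (fun i => (a i - b i) * x ^ i) (k + h)) 0).
      { apply (is_lim_seq_incr_n (fun H => sum_f_R0 (fun i => (a i - b i) * x ^ i) H) h 0).
        apply is_lim_seq_ext with (fun H => sum_f_R0 (fun i => a i * x ^ i) H - sum_f_R0 (fun i => b i * x ^ i) H).
        intros H. rewrite <- minus_sum. apply sum_eq. intros; ring.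
        replace (Finite 0) with (Finite (Sx x - Sx x)) by (f_equal; ring).
        apply is_lim_seq_minus'; apply series_lim; auto. }
      assert (H2: 0 <= (2 * x) ^ S h) by (apply pow_le; lra).
      assert (Hup: forall k, (a h - b h) * x ^ h <= sum_f_R0 (fun i => (a i - b i) * x ^ i) (k + h) + (2 * x) ^ S h * T).
      { intros k. pose proof (HK x Hx k). rewrite Nat.add_comm in H. pose proof (HPT (k + h)%nat).
        apply Rabs_le_between in H. assert ((2 * x) ^ S h * sum_f_R0 (fun i => (a i + b i) * (/2) ^ i) (k + h) <= (2 * x) ^ S h * T) by (apply Rmult_le_compat_l; auto).
        lra. }
      assert (Hlo: forall k, sum_f_R0 (fun i => (a i - b i) * x ^ i) (k + h) - (2 * x) ^ S h * T <= (a h - b h) * x ^ h).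
      { intros k. pose proof (HK x Hx k). rewrite Nat.add_comm in H. pose proof (HPT (k + h)%nat).
        apply Rabs_le_between in H. assert ((2 * x) ^ S h * sum_f_R0 (fun i => (a i + b i) * (/2) ^ i) (k + h) <= (2 * x) ^ S h * T) by (apply Rmult_le_compat_l; auto).
        lra. }
      assert (L1: Rbar_le ((a h - b h) * x ^ h) (0 + (2 * x) ^ S h * T)).
      { apply is_lim_seq_le with (u := fun _ => (a h - b h) * x ^ h) (v := fun k => sum_f_R0 (fun i => (a i - b i) * x ^ i) (k + h) + (2 * x) ^ S h * T); auto.
        apply is_lim_seq_const. apply is_lim_seq_plus'; auto. apply is_lim_seq_const. }
      assert (L2: Rbar_le (0 - (2 * x) ^ S h * T) ((a h - b h) * x ^ h)).
      { apply is_lim_seq_le with (v := fun _ => (a h - b h) * x ^ h) (u := fun k => sum_f_R0 (fun i => (a i - b i) * x ^ i) (k + h) - (2 * x) ^ S h * T); auto.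
        apply is_lim_seq_minus'; auto. apply is_lim_seq_const. apply is_lim_seq_const. }
      change (Rbar_le (Finite ?a) (Finite ?b)) with (a <= b) in L1, L2. apply Rabs_le. lra. }
    assert (Hc: forall N, Rabs (a h - b h) <= 2 ^ S h * T * / (2 * INR (S N))).
    { intros N. pose proof (INR_S_ge1c N) as HN.
      set (x := / (2 * INR (S N))).
      assert (Hx: 0 < x <= /2).
      { unfold x. split. apply Rinv_0_lt_compat; lra. apply Rinv_le_contravar; lra. }
      pose proof (Hbound x Hx). rewrite Rabs_mult, (Rabs_pos_eq (x ^ h)) in H by (apply pow_le; lra).
      rewrite Rpow_mult_distr in H. simpl pow in H at 2.
      assert (0 < x ^ h) by (apply pow_lt; lra).
      apply Rmult_le_reg_r with (x ^ h); auto. replace (2 ^ S h * T * x * x ^ h) with (2 ^ S h * (x * x ^ h) * T) by ring.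
      exact H. }
    assert (Hl: Rbar_le (Rabs (a h - b h)) 0).
    { apply is_lim_seq_le with (u := fun _ => Rabs (a h - b h)) (v := fun N => 2 ^ S h * T * / (2 * INR (S N))); auto.
      apply is_lim_seq_const.
      replace (Finite 0) with (Finite (2 ^ S h * T * / 2 * 0)) by (f_equal; ring).
      apply is_lim_seq_ext with (fun N => 2 ^ S h * T * / 2 * / INR (S N)).
      intros N. rewrite Rinv_mult. ring.
      apply is_lim_seq_mult'. apply is_lim_seq_const. apply lim_inv_S'. }
    change (Rbar_le (Finite ?a) (Finite ?b)) with (a <= b) in Hl. pose proof (Rabs_pos (a h - b h)). assert (Rabs (a h - b h) = 0) by lra.
    apply Rabs_eq_0 in H0. lra. }
  intros h. induction h as [h IHh] using (well_founded_induction lt_wf). apply Hmain. auto.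
Qed.

Section Conn.
Variable x : R.
Hypothesis hx0 : 0 <= x.
Hypothesis hx1 : x <= /2.

Definition w (m : nat) : R := / (INR m - x).

Fixpoint Pp (k : nat) : R := match k with O => 1 | S k' => Pp k' * (INR (S k') - x) end.

Lemma Pp_S k : Pp (S k) = Pp k * (INR (S k) - x).
Proof. reflexivity. Qed.

Definition Cc (m n : nat) : R := Pp m * Pp n / Pp (m + n).

Fixpoint E (j M : nat) : R :=
  match j with O => 1 | S j' => sumR M (fun m => w m * E j' (m - 1)) end.

Definition Ch (j : nat) (f : nat -> R) (M : nat) : R :=
  match j with O => f O | S j' => sumR M (fun m => f m * w m * E j' (m - 1)) end.

Lemma INR_S_ge1 m : 1 <= INR (S m).
Proof. rewrite S_INR. pose proof (pos_INR m). lra. Qed.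

Lemma INR_ge1 m : (1 <= m)%nat -> 1 <= INR m.
Proof. intros H. destruct m; [lia|]. apply INR_S_ge1. Qed.

Lemma Sx_pos m : 0 < INR (S m) - x.
Proof. pose proof (INR_S_ge1 m). lra. Qed.

Lemma Pp_pos k : 0 < Pp k.
Proof. induction k; simpl; [lra|]. apply Rmult_lt_0_compat; auto. apply Sx_pos. Qed.

Lemma w_pos m : (1 <= m)%nat -> 0 < w m.
Proof. intros H. destruct m; [lia|]. unfold w. apply Rinv_0_lt_compat, Sx_pos. Qed.

Lemma w_le m : (1 <= m)%nat -> w m <= 2 * / INR m.
Proof. intros H. pose proof (INR_ge1 m H). unfold w.
  apply Rmult_le_reg_l with (INR m - x). lra. rewrite Rinv_r by lra.
  replace ((INR m - x) * (2 * / INR m)) with (2 * (INR m - x) / INR m) by (field; lra).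
  apply Rmult_le_reg_r with (INR m). lra. unfold Rdiv. rewrite Rmult_assoc, Rinv_l by lra. lra.
Qed.

Lemma w_ge m : (1 <= m)%nat -> / INR m <= w m.
Proof. intros H. pose proof (INR_ge1 m H). unfold w. apply Rinv_le_contravar; lra. Qed.

Lemma Cc_pos m n : 0 < Cc m n.
Proof. unfold Cc. pose proof (Pp_pos m). pose proof (Pp_pos n). pose proof (Pp_pos (m + n)).
  unfold Rdiv. apply Rmult_lt_0_compat; [nra|]. apply Rinv_0_lt_compat; auto. Qed.

Lemma Cc_sym m n : Cc m n = Cc n m.
Proof. unfold Cc. rewrite (Nat.add_comm n m). rewrite (Rmult_comm (Pp m)). reflexivity. Qed.

Lemma Cc_m0 m : Cc m 0 = 1.
Proof. unfold Cc. rewrite Nat.add_0_r. change (Pp 0) with 1. pose proof (Pp_pos m). field. lra. Qed.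

Lemma Cc_0n n : Cc 0 n = 1.
Proof. rewrite Cc_sym. apply Cc_m0. Qed.

Lemma Cc_F1 m n : INR n * Cc (S m) n * w (S m) = Cc m n - Cc (S m) n.
Proof.
  unfold Cc, w. rewrite Pp_S. replace (S m + n)%nat with (S (m + n)) by lia. rewrite Pp_S.
  pose proof (Sx_pos m). pose proof (Sx_pos (m + n)). pose proof (Pp_pos m). pose proof (Pp_pos n).
  pose proof (Pp_pos (m + n)).
  replace (INR (S (m + n))) with (INR (S m) + INR n) by (rewrite !S_INR, plus_INR; ring).
  field. repeat split; try lra. replace (INR (S m) + INR n - x) with (INR (S (m+n)) - x) by (rewrite !S_INR, plus_INR; ring). lra.
Qed.

Lemma Cc_F2 m n : INR m * Cc m (S n) * w (S n) = Cc m n - Cc m (S n).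
Proof. rewrite (Cc_sym m (S n)), (Cc_sym m n). apply Cc_F1. Qed.

Lemma Cc_dec m n : Cc m (S n) <= Cc m n.
Proof. pose proof (Cc_F2 m n). pose proof (pos_INR m). pose proof (Cc_pos m (S n)).
  pose proof (w_pos (S n) ltac:(lia)). assert (0 <= INR m * Cc m (S n) * w (S n)).
  { apply Rmult_le_pos; [apply Rmult_le_pos|]; lra. } lra. Qed.

Lemma Cc_1 M : Cc M 1 <= / INR (S M).
Proof.
  unfold Cc. replace (M + 1)%nat with (S M) by lia.
  pose proof (Pp_pos M). pose proof (Sx_pos M). pose proof (INR_S_ge1 M).
  replace (Pp M * Pp 1 / Pp (S M)) with ((1 - x) / (INR (S M) - x))
    by (rewrite (Pp_S M); change (Pp 1) with (1 * (1 - x)); field; lra).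
  assert (Hd: / INR (S M) - (1 - x) / (INR (S M) - x) = x * (INR (S M) - 1) / (INR (S M) * (INR (S M) - x)))
    by (field; lra).
  assert (0 <= x * (INR (S M) - 1) / (INR (S M) * (INR (S M) - x))).
  { unfold Rdiv. apply Rmult_le_pos. nra. left. apply Rinv_0_lt_compat. nra. }
  lra.
Qed.

Lemma Cc_le M n : (1 <= n)%nat -> Cc M n <= / INR (S M).
Proof. intros H. induction H. apply Cc_1. pose proof (Cc_dec M m). lra. Qed.

Lemma E_nonneg j M : 0 <= E j M.
Proof. revert M; induction j; intros M; simpl; [lra|]. apply sumR_nonneg. intros m Hm.
  pose proof (w_pos m ltac:(lia)). specialize (IHj (m - 1)%nat). nra. Qed.

Lemma E_mono j M M' : (M <= M')%nat -> E j M <= E j M'.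
Proof. intros H. destruct j; simpl; [lra|]. induction H; [lra|].
  change (sumR (S m) ?f) with (sumR m f + f (S m)). cbv beta.
  pose proof (w_pos (S m) ltac:(lia)). pose proof (E_nonneg j (S m - 1)).
  assert (0 <= w (S m) * E j (S m - 1)) by (apply Rmult_le_pos; lra). lra. Qed.

Lemma Ch_ext j f g M : (1 <= j)%nat -> (forall m, (1 <= m)%nat -> f m = g m) -> Ch j f M = Ch j g M.
Proof. intros Hj H. destruct j; [lia|]. simpl. apply sumR_ext. intros m Hm. rewrite H by lia. auto. Qed.

Lemma Ch_ext_all j f g M : (forall m, f m = g m) -> Ch j f M = Ch j g M.
Proof. intros H. destruct j; simpl; auto. apply sumR_ext. intros m Hm. rewrite H. auto. Qed.

Lemma Ch_lin j a b f g M : Ch j (fun m => a * f m + b * g m) M = a * Ch j f M + b * Ch j g M.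
Proof. destruct j; simpl; auto. rewrite <- !sumR_scal, <- sumR_plus. apply sumR_ext. intros; ring. Qed.

Lemma Ch_scal j a f M : Ch j (fun m => a * f m) M = a * Ch j f M.
Proof. destruct j; simpl; auto. rewrite <- !sumR_scal. apply sumR_ext. intros; ring. Qed.

Lemma Ch_one j M : Ch j (fun _ => 1) M = E j M.
Proof. destruct j; simpl; auto. apply sumR_ext. intros; ring. Qed.

Lemma Ch_sumR j N F M : Ch j (fun m => sumR N (fun n => F n m)) M = sumR N (fun n => Ch j (F n) M).
Proof. induction N; simpl.
  - destruct j; simpl; auto. apply sumR_zero. intros; ring.
  - rewrite <- IHN. rewrite <- (Rmult_1_l (Ch j (fun m => sumR N (fun n => F n m)) M)).
    rewrite <- (Rmult_1_l (Ch j (F (S N)) M)). rewrite <- Ch_lin. destruct j; simpl; [ring|].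
    apply sumR_ext; intros; ring. Qed.

Lemma Ch_mono j f g M : (forall m, f m <= g m) -> Ch j f M <= Ch j g M.
Proof. intros H. destruct j; simpl; auto. apply sumR_le. intros m Hm.
  pose proof (w_pos m ltac:(lia)). pose proof (E_nonneg j (m - 1)). specialize (H m).
  apply Rmult_le_compat_r; auto. apply Rmult_le_compat_r; lra. Qed.

Lemma Ch_nonneg j f M : (forall m, 0 <= f m) -> 0 <= Ch j f M.
Proof. intros H. replace 0 with (Ch j (fun _ => 0) M). apply Ch_mono; auto.
  destruct j; simpl; auto. apply sumR_zero; intros; ring. Qed.

Lemma triangle M (h u : nat -> R) :
  sumR M (fun m => h m * sumR (m - 1) u) = sumR M (fun m' => u m' * (sumR M h - sumR m' h)).
Proof.
  induction M; simpl; auto.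
  rewrite IHM. rewrite Nat.sub_0_r. rewrite (sumR_ext M (fun m' => u m' * (sumR M h + h (S M) - sumR m' h))
     (fun m' => u m' * (sumR M h - sumR m' h) + h (S M) * u m')) by (intros; ring).
  rewrite sumR_plus, sumR_scal. ring.
Qed.

Lemma Ch_peel j f M : Ch (S j) f M =
  Ch j (fun a => sumR M (fun m => f m * w m) - sumR a (fun m => f m * w m)) M.
Proof.
  destruct j as [|j']; simpl.
  - rewrite Rminus_0_r. apply sumR_ext. intros; ring.
  - rewrite (triangle M (fun m => f m * w m) (fun m0 => w m0 * E j' (m0 - 1))). apply sumR_ext. intros; ring.
Qed.


Lemma tele_m n a : (1 <= n)%nat -> sumR a (fun m => Cc m n * w m) = (1 - Cc a n) / INR n.
Proof.
  intros Hn. pose proof (INR_ge1 n Hn). induction a.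
  - simpl. rewrite Cc_0n. unfold Rdiv. ring.
  - change (sumR (S a) ?f) with (sumR a f + f (S a)). cbv beta. rewrite IHa.
    pose proof (Cc_F1 a n). apply Rmult_eq_reg_l with (INR n); [|lra].
    unfold Rdiv. rewrite Rmult_plus_distr_l, !(Rmult_comm (INR n) (_ * / INR n)), !Rmult_assoc, !Rinv_l by lra.
    lra.
Qed.

Lemma tele_n m N : (1 <= m)%nat -> sumR N (fun n => Cc m n * w n) = (1 - Cc m N) / INR m.
Proof.
  intros Hm. pose proof (INR_ge1 m Hm). induction N.
  - simpl. rewrite Cc_m0. unfold Rdiv. ring.
  - change (sumR (S N) ?f) with (sumR N f + f (S N)). cbv beta. rewrite IHN.
    pose proof (Cc_F2 m N). apply Rmult_eq_reg_l with (INR m); [|lra].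
    unfold Rdiv. rewrite Rmult_plus_distr_l, !(Rmult_comm (INR m) (_ * / INR m)), !Rmult_assoc, !Rinv_l by lra.
    lra.
Qed.

Definition V (j M n : nat) : R := Ch j (fun m => Cc m n) M.

Lemma V_rec j M n : (1 <= n)%nat -> V (S j) M n = (V j M n - Cc M n * E j M) / INR n.
Proof.
  intros Hn. pose proof (INR_ge1 n Hn). unfold V. rewrite Ch_peel.
  rewrite (Ch_ext_all j _ (fun a => / INR n * Cc a n + (- (Cc M n / INR n)) * 1)).
  - rewrite Ch_lin, Ch_one. unfold Rdiv. ring.
  - intros a. rewrite !tele_m by auto. field. lra.
Qed.

Lemma V_0 M n : V 0 M n = 1.
Proof. unfold V. simpl. apply Cc_0n. Qed.

Lemma V_nonneg j M n : 0 <= V j M n.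
Proof. unfold V. apply Ch_nonneg. intros; left; apply Cc_pos. Qed.

Lemma V_le j M n : (1 <= n)%nat -> V j M n <= / INR n ^ j.
Proof.
  intros Hn. pose proof (INR_ge1 n Hn). induction j.
  - rewrite V_0. simpl. lra.
  - rewrite V_rec by auto. pose proof (Cc_pos M n). pose proof (E_nonneg j M).
    assert (0 <= Cc M n * E j M) by (apply Rmult_le_pos; lra).
    assert (Hi: 0 < / INR n) by (apply Rinv_0_lt_compat; lra).
    apply Rle_trans with ((/ INR n ^ j) * / INR n).
    + unfold Rdiv. apply Rmult_le_compat_r; lra.
    + right. simpl. rewrite Rinv_mult. ring.
Qed.

Fixpoint Esum (j M : nat) : R := match j with O => 0 | S j' => Esum j' M + E j' M end.

Lemma V_err j M n : (1 <= n)%nat -> / INR n ^ j - V j M n <= Cc M n * Esum j M.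
Proof.
  intros Hn. pose proof (INR_ge1 n Hn). induction j.
  - rewrite V_0. simpl. lra.
  - rewrite V_rec by auto. simpl Esum. pose proof (V_le j M n Hn).
    pose proof (Cc_pos M n). pose proof (E_nonneg j M).
    assert (Hi: 0 < / INR n <= 1). { split. apply Rinv_0_lt_compat; lra. rewrite <- Rinv_1. apply Rinv_le_contravar; lra. }
    replace (/ INR n ^ S j - (V j M n - Cc M n * E j M) / INR n)
      with (/ INR n * ((/ INR n ^ j - V j M n) + Cc M n * E j M)) by (simpl; rewrite Rinv_mult; unfold Rdiv; ring).
    assert (0 <= (/ INR n ^ j - V j M n) + Cc M n * E j M).
    { assert (0 <= Cc M n * E j M) by (apply Rmult_le_pos; lra). lra. }
    assert (/ INR n * ((/ INR n ^ j - V j M n) + Cc M n * E j M) <= (/ INR n ^ j - V j M n) + Cc M n * E j M).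
    { rewrite <- (Rmult_1_l (_ + _)) at 2. apply Rmult_le_compat_r; lra. }
    lra.
Qed.

Definition Lf (j M : nat) : R := Ch j (fun m => / INR m) M.

Definition Zs (d N : nat) : R := sumR N (fun n => w n * / INR n ^ d).

Lemma L_decomp j M N : (1 <= j)%nat ->
  Lf j M = sumR N (fun n => w n * V j M n) + Ch j (fun m => Cc m N / INR m) M.
Proof.
  intros Hj. unfold Lf, V.
  rewrite (Ch_ext j _ (fun m => sumR N (fun n => w n * Cc m n) + 1 * (Cc m N / INR m))); auto.
  2:{ intros m Hm; pose proof (INR_ge1 m Hm); rewrite (sumR_ext N _ (fun n => Cc m n * w n)) by (intros; ring);
     rewrite tele_n by auto; field; lra. }
  rewrite <- (Rmult_1_l (sumR N _)) at 1.
  rewrite (Ch_ext_all j _ (fun m => 1 * sumR N (fun n => w n * Cc m n) + 1 * (Cc m N / INR m))) by (intros; ring).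
  rewrite Ch_lin, Ch_sumR. rewrite (sumR_ext N (fun n => Ch j (fun m => w n * Cc m n) M) (fun n => w n * Ch j (fun m => Cc m n) M))
    by (intros; apply Ch_scal). ring.
Qed.



Lemma tele_inv N : sumR N (fun n => / INR n - / INR (S n)) = 1 - / INR (S N).
Proof. induction N. simpl. rewrite Rinv_1. lra. change (sumR (S N) ?f) with (sumR N f + f (S N)). cbv beta.
  rewrite IHN. lra. Qed.

Lemma inv_sq_le n : (1 <= n)%nat -> / INR n * / INR n <= 2 * (/ INR n - / INR (S n)).
Proof. intros Hn. pose proof (INR_ge1 n Hn). rewrite S_INR.
  replace (/ INR n - / (INR n + 1)) with (/ (INR n * (INR n + 1))) by (field; lra).
  rewrite <- Rinv_mult. replace (2 * / (INR n * (INR n + 1))) with (/ (INR n * ((INR n + 1) / 2))) by (field; lra).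
  apply Rinv_le_contravar. nra. nra. Qed.

Lemma Zs_le d N : (1 <= d)%nat -> Zs d N <= 4.
Proof.
  intros Hd. unfold Zs. apply Rle_trans with (sumR N (fun n => 4 * (/ INR n - / INR (S n)))).
  - apply sumR_le. intros n Hn. pose proof (INR_ge1 n ltac:(lia)). pose proof (w_le n ltac:(lia)).
    pose proof (w_pos n ltac:(lia)). pose proof (inv_sq_le n ltac:(lia)).
    assert (/ INR n ^ d <= / INR n).
    { apply Rinv_le_contravar. lra. rewrite <- (pow_1 (INR n)) at 1. apply Rle_pow; [lra|lia]. }
    assert (0 <= / INR n ^ d) by (left; apply Rinv_0_lt_compat, pow_lt; lra).
    apply Rle_trans with (2 * / INR n * / INR n). apply Rmult_le_compat; lra. lra.
  - rewrite sumR_scal, tele_inv. pose proof (RinvN_pos N). rewrite S_INR. lra.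
Qed.

Lemma Zs_nonneg d N : 0 <= Zs d N.
Proof. unfold Zs. apply sumR_nonneg. intros n Hn. pose proof (w_pos n ltac:(lia)).
  pose proof (INR_ge1 n ltac:(lia)). assert (0 < / INR n ^ d) by (apply Rinv_0_lt_compat, pow_lt; lra). nra. Qed.

Lemma Zs_mono d N : Zs d N <= Zs d (S N).
Proof. unfold Zs. change (sumR (S N) ?f) with (sumR N f + f (S N)). cbv beta.
  pose proof (w_pos (S N) ltac:(lia)). pose proof (INR_ge1 (S N) ltac:(lia)).
  assert (0 < / INR (S N) ^ d) by (apply Rinv_0_lt_compat, pow_lt; lra). nra. Qed.

Lemma Lf_nonneg j M : 0 <= Lf j M.
Proof. unfold Lf. apply Ch_nonneg. intros m. destruct m. simpl. rewrite Rinv_0; lra.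
  left. apply Rinv_0_lt_compat. pose proof (INR_S_ge1 m); lra. Qed.

Lemma Lf_mono j M : (1 <= j)%nat -> Lf j M <= Lf j (S M).
Proof. intros Hj. destruct j; [lia|]. unfold Lf, Ch. change (sumR (S M) ?f) with (sumR M f + f (S M)). cbv beta.
  pose proof (w_pos (S M) ltac:(lia)). pose proof (INR_S_ge1 M). pose proof (E_nonneg j (S M - 1)).
  assert (0 < / INR (S M)) by (apply Rinv_0_lt_compat; lra).
  assert (0 <= / INR (S M) * w (S M) * E j (S M - 1)) by (apply Rmult_le_pos; [apply Rmult_le_pos|]; lra). lra. Qed.

Lemma Rem_bound j M N : (1 <= N)%nat -> Ch j (fun m => Cc m N / INR m) M <= / INR (S N) * Lf j M.
Proof.
  intros HN. unfold Lf. rewrite <- Ch_scal. apply Ch_mono. intros m. destruct m.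
  - change (INR 0) with 0. unfold Rdiv. rewrite Rinv_0. rewrite !Rmult_0_r. right; reflexivity.
  - rewrite Cc_sym. pose proof (Cc_le N (S m) ltac:(lia)). pose proof (INR_S_ge1 m).
    assert (0 < / INR (S m)) by (apply Rinv_0_lt_compat; lra). unfold Rdiv.
    apply Rmult_le_compat_r; lra.
Qed.

Lemma Rem_nonneg j M N : 0 <= Ch j (fun m => Cc m N / INR m) M.
Proof. apply Ch_nonneg. intros m. pose proof (Cc_pos m N). destruct m. change (INR 0) with 0. unfold Rdiv. rewrite Rinv_0. lra.
  pose proof (INR_S_ge1 m). assert (0 < / INR (S m)) by (apply Rinv_0_lt_compat; lra). unfold Rdiv. nra. Qed.

Lemma main_sum_le j M N : sumR N (fun n => w n * V j M n) <= Zs j N.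
Proof. unfold Zs. apply sumR_le. intros n Hn. pose proof (w_pos n ltac:(lia)). pose proof (V_le j M n ltac:(lia)).
  apply Rmult_le_compat_l; lra. Qed.

Lemma Lf_upper j M N : (1 <= j)%nat -> (1 <= N)%nat -> (1 - / INR (S N)) * Lf j M <= Zs j N.
Proof. intros Hj HN. pose proof (L_decomp j M N Hj). pose proof (Rem_bound j M N HN). pose proof (main_sum_le j M N).
  lra. Qed.

Lemma Lf_le8 j M : (1 <= j)%nat -> Lf j M <= 8.
Proof. intros Hj. pose proof (Lf_upper j M 1 Hj ltac:(lia)). pose proof (Zs_le j 1 Hj).
  replace (/ INR 2) with (/2) in H by (simpl; f_equal; ring). lra. Qed.


Lemma sumR_const N c : sumR N (fun _ => c) = INR N * c.
Proof. induction N; simpl sumR. simpl; ring. rewrite IHN, S_INR. ring. Qed.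

Lemma tail_bound i M : (1 <= M)%nat -> E i M * / INR M <= 4 * (Lf (S i) (M + M) - Lf (S i) M).
Proof.
  intros HM. pose proof (INR_ge1 M HM). unfold Lf, Ch. rewrite sumR_add.
  assert (Hs: sumR M (fun k => E i M * / (4 * INR M * INR M)) <=
     sumR M (fun k => / INR (M + k) * w (M + k) * E i (M + k - 1))).
  { apply sumR_le. intros k Hk. pose proof (INR_ge1 k ltac:(lia)).
    assert (INR k <= INR M) by (apply le_INR; lia).
    assert (HMk: INR M + 1 <= INR (M + k) <= 2 * INR M) by (rewrite plus_INR; split; lra).
    pose proof (w_ge (M + k) ltac:(lia)). pose proof (E_mono i M (M + k - 1) ltac:(lia)). pose proof (E_nonneg i M).
    assert (Hinv: / (2 * INR M) <= / INR (M + k)) by (apply Rinv_le_contravar; lra).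
    assert (0 < / (2 * INR M)) by (apply Rinv_0_lt_compat; lra).
    replace (/ (4 * INR M * INR M)) with (/ (2 * INR M) * / (2 * INR M)) by (field; lra).
    apply Rle_trans with (/ INR (M + k) * w (M + k) * E i M).
    - rewrite (Rmult_comm (E i M)). apply Rmult_le_compat_r; auto. apply Rmult_le_compat; lra.
    - apply Rmult_le_compat_l; auto. apply Rmult_le_pos; lra. }
  rewrite sumR_const in Hs. replace (INR M * (E i M * / (4 * INR M * INR M))) with (E i M * / INR M / 4) in Hs
    by (field; lra). lra.
Qed.

Lemma lim_inv_S : is_lim_seq (fun N => / INR (S N)) 0.
Proof.
  apply (is_lim_seq_inv (fun N => INR (S N)) p_infty).
  apply -> (is_lim_seq_incr_1 INR). apply is_lim_seq_INR. simpl. congruence.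
Qed.

Lemma Lf_cv j : (1 <= j)%nat -> exists Ll : R, is_lim_seq (Lf j) Ll.
Proof.
  intros Hj. assert (H: ex_finite_lim_seq (Lf j)).
  { apply ex_finite_lim_seq_incr with 8. intros; apply Lf_mono; auto. intros; apply Lf_le8; auto. }
  exact H.
Qed.

Lemma Zs_cv d : (1 <= d)%nat -> exists Zl : R, is_lim_seq (Zs d) Zl.
Proof.
  intros Hd. assert (H: ex_finite_lim_seq (Zs d)).
  { apply ex_finite_lim_seq_incr with 4. intros; apply Zs_mono. intros; apply Zs_le; auto. }
  exact H.
Qed.

Lemma CE_lim i n : (1 <= n)%nat -> is_lim_seq (fun M => Cc M n * E i M) 0.
Proof.
  intros Hn. destruct (Lf_cv (S i) ltac:(lia)) as [Ll HL].
  apply is_lim_seq_incr_1.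
  apply is_lim_seq_le_le with (u := fun _ => 0) (w := fun M => 4 * (Ll - Lf (S i) (S M))).
  - intros M. pose proof (Cc_pos (S M) n). pose proof (E_nonneg i (S M)). split.
    + apply Rmult_le_pos; lra.
    + pose proof (Cc_le (S M) n Hn). pose proof (tail_bound i (S M) ltac:(lia)).
      pose proof (is_lim_seq_incr_compare _ _ HL (fun k => Lf_mono (S i) k ltac:(lia)) (S M + S M)).
      assert (/ INR (S (S M)) <= / INR (S M)).
      { apply Rinv_le_contravar. pose proof (INR_S_ge1 M); lra. apply le_INR; lia. }
      apply Rle_trans with (E i (S M) * / INR (S M)); [|lra].
      rewrite Rmult_comm. apply Rmult_le_compat_l; lra.
  - apply is_lim_seq_const.
  - replace 0 with (4 * (Ll - Ll)) by ring. apply is_lim_seq_scal_l with (a := 4) (lu := Ll - Ll).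
    apply is_lim_seq_minus'. apply is_lim_seq_const. apply -> (is_lim_seq_incr_1 (Lf (S i))). auto.
Qed.

Lemma CEsum_lim j n : (1 <= n)%nat -> is_lim_seq (fun M => Cc M n * Esum j M) 0.
Proof.
  intros Hn. induction j.
  - simpl. apply is_lim_seq_ext with (fun _ => 0). intros; ring. apply is_lim_seq_const.
  - simpl. replace 0 with (0 + 0) by ring.
    apply is_lim_seq_ext with (fun M => Cc M n * Esum j M + Cc M n * E j M). intros; ring.
    apply is_lim_seq_plus'; auto. apply CE_lim; auto.
Qed.

Lemma V_lim j n : (1 <= n)%nat -> is_lim_seq (fun M => V j M n) (/ INR n ^ j).
Proof.
  intros Hn. apply is_lim_seq_le_le with (u := fun M => / INR n ^ j - Cc M n * Esum j M) (w := fun _ => / INR n ^ j).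
  - intros M. pose proof (V_err j M n Hn). pose proof (V_le j M n Hn). lra.
  - pose proof (is_lim_seq_minus' _ _ _ _ (is_lim_seq_const (/ INR n ^ j)) (CEsum_lim j n Hn)) as Hm.
    rewrite Rminus_0_r in Hm. exact Hm.
  - apply is_lim_seq_const.
Qed.

Lemma sumR_lim N (u : nat -> nat -> R) (l : nat -> R) :
  (forall n, (1 <= n <= N)%nat -> is_lim_seq (u n) (l n)) ->
  is_lim_seq (fun M => sumR N (fun n => u n M)) (sumR N l).
Proof.
  induction N; intros H; simpl.
  - apply is_lim_seq_const.
  - apply is_lim_seq_plus'. apply IHN. intros; apply H; lia. apply H; lia.
Qed.

Lemma conn_main d (Ll Zl : R) : (1 <= d)%nat -> is_lim_seq (Lf d) Ll -> is_lim_seq (Zs d) Zl -> Ll = Zl.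
Proof.
  intros Hd HL HZ. apply Rle_antisym.
  - assert (H1: forall N, (1 - / INR (S N)) * Ll <= Zl).
    { intros N. destruct N as [|N].
      - simpl INR. rewrite Rinv_1. replace ((1 - 1) * Ll) with 0 by ring.
        pose proof (is_lim_seq_incr_compare _ _ HZ (Zs_mono d) 0). pose proof (Zs_nonneg d 0). lra.
      - pose proof (is_lim_seq_incr_compare _ _ HZ (Zs_mono d) (S N)).
        assert (Hl: Rbar_le ((1 - / INR (S (S N))) * Ll) (Zs d (S N))).
        { apply is_lim_seq_le with (u := fun M => (1 - / INR (S (S N))) * Lf d M) (v := fun _ => Zs d (S N)).
          intros M. apply Lf_upper; auto; lia.
          apply is_lim_seq_mult'. apply is_lim_seq_const. auto. apply is_lim_seq_const. }
        change (Rbar_le (Finite ?a) (Finite ?b)) with (a <= b) in Hl. lra. }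
    assert (Hl: Rbar_le Ll Zl).
    { apply is_lim_seq_le with (u := fun N => (1 - / INR (S N)) * Ll) (v := fun _ => Zl); auto.
      pose proof (is_lim_seq_mult' _ _ _ _ (is_lim_seq_minus' _ _ _ _ (is_lim_seq_const 1) lim_inv_S) (is_lim_seq_const Ll)) as Hm.
      replace ((1 - 0) * Ll) with Ll in Hm by ring. exact Hm. apply is_lim_seq_const. }
    change (Rbar_le (Finite ?a) (Finite ?b)) with (a <= b) in Hl. auto.
  - assert (H1: forall N, Zs d N <= Ll).
    { intros N. assert (Hl: Rbar_le (Zs d N) Ll).
      { apply is_lim_seq_le with (u := fun M => sumR N (fun n => w n * V d M n)) (v := Lf d); auto.
        - intros M. pose proof (L_decomp d M N Hd). pose proof (Rem_nonneg d M N). lra.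
        - unfold Zs. apply sumR_lim. intros n Hn. apply is_lim_seq_scal_l with (a := w n) (lu := / INR n ^ d).
          apply V_lim; lia. }
      change (Rbar_le (Finite ?a) (Finite ?b)) with (a <= b) in Hl; auto. }
    assert (Hl: Rbar_le Zl Ll).
    { apply is_lim_seq_le with (u := Zs d) (v := fun _ => Ll); auto. apply is_lim_seq_const. }
    change (Rbar_le (Finite ?a) (Finite ?b)) with (a <= b) in Hl; auto.
Qed.

End Conn.

Definition ecoef j h M := Y j (j + h) (fun p => mzv_trunc p M).
Definition acoef d h M := Y d (d + h) (fun p => mzv_trunc (inc p) M).

Lemma Y_S j K G : Y (S j) K G = sumR K (fun a => Y j (K - a) (fun p => G (a :: p))).
Proof.
  unfold Y. change (comps (S j) K) with (flat_map (fun a => map (cons a) (comps j (K - a))) (seq 1 K)).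
  rewrite sum_list_flat_map, <- sum_list_seq1. f_equal. apply map_ext. intros a. rewrite map_map. auto.
Qed.

Lemma Y_ext j w G1 G2 : (forall p, In p (comps j w) -> G1 p = G2 p) -> Y j w G1 = Y j w G2.
Proof. intros H. unfold Y. apply sum_list_map_ext. auto. Qed.

Lemma Y_sumR j w M F : Y j w (fun p => sumR M (fun m => F m p)) = sumR M (fun m => Y j w (F m)).
Proof. unfold Y. apply sum_list_map_sumR. Qed.

Lemma Y_scal j w c G : Y j w (fun p => c * G p) = c * Y j w G.
Proof. unfold Y. apply sum_list_map_scal. Qed.

Lemma coef_rec j h M s :
  Y (S j) (S j + h) (fun p => match p with [] => 0 | a :: p' => sumR M (fun m => / INR m ^ (a + s) * mzv_trunc p' (m - 1)) end)
  = sumR M (fun m => sumR (S h) (fun a => / INR m ^ (a + s) * ecoef j (h + 1 - a) (m - 1))).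
Proof.
  rewrite Y_S.
  rewrite (sumR_ext _ _ (fun a => sumR M (fun m => / INR m ^ (a + s) * Y j (S j + h - a) (fun p => mzv_trunc p (m - 1))))).
  2:{ intros a Ha. rewrite (Y_sumR j _ M (fun m p => / INR m ^ (a + s) * mzv_trunc p (m - 1))).
      apply sumR_ext. intros m Hm. rewrite (Y_scal j _ (/ INR m ^ (a + s)) (fun p => mzv_trunc p (m - 1))). auto. }
  rewrite sumR_swap. apply sumR_ext. intros m Hm.
  replace (S j + h)%nat with (S h + j)%nat by lia. rewrite sumR_add.
  rewrite (sumR_zero j (fun i => / INR m ^ (S h + i + s) * Y j (S h + j - (S h + i)) (fun p => mzv_trunc p (m - 1)))).
  2:{ intros i Hi. rewrite Y_zero by lia. ring. }
  rewrite Rplus_0_r. apply sumR_ext. intros a Ha. unfold ecoef.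
  replace (S h + j - a)%nat with (j + (h + 1 - a))%nat by lia. reflexivity.
Qed.

Lemma sumf_to_sumR F h : sum_f_R0 F h = sumR (S h) (fun a => F (a - 1)%nat).
Proof. induction h. simpl. lra. rewrite tech5, IHh. change (sumR (S (S h)) ?f) with (sumR (S h) f + f (S (S h))).
  cbv beta. replace (S (S h) - 1)%nat with (S h) by lia. auto. Qed.

Lemma mzv_trunc_nonneg ks M : 0 <= mzv_trunc ks M.
Proof. revert M; induction ks; intros M; simpl; [lra|]. apply sumR_nonneg. intros m Hm.
  apply Rmult_le_pos; auto. left. apply Rinv_0_lt_compat, pow_lt. pose proof (INR_ge1 m ltac:(lia)); lra. Qed.

Lemma Y_nonneg j w G : (forall p, 0 <= G p) -> 0 <= Y j w G.
Proof. intros H. unfold Y. apply sum_list_nonneg. intros a Ha. apply in_map_iff in Ha. destruct Ha as [p [<- _]]. auto. Qed.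

Lemma ecoef_nonneg j h M : 0 <= ecoef j h M.
Proof. apply Y_nonneg. intros; apply mzv_trunc_nonneg. Qed.

Lemma acoef_nonneg j h M : 0 <= acoef j h M.
Proof. apply Y_nonneg. intros; apply mzv_trunc_nonneg. Qed.

Section Ser.
Variable x : R.
Hypothesis hx0 : 0 <= x.
Hypothesis hx1 : x <= /2.

Lemma geom_w m : (1 <= m)%nat -> is_series (fun i => x ^ i * / INR m ^ (S i)) (w x m).
Proof.
  intros Hm. pose proof (INR_ge1 m Hm).
  assert (Hq: Rabs (x * / INR m) < 1).
  { rewrite Rabs_pos_eq. apply Rmult_lt_reg_r with (INR m); [lra|]. rewrite Rmult_assoc, Rinv_l by lra. lra.
    apply Rmult_le_pos; [lra|]. left; apply Rinv_0_lt_compat; lra. }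
  pose proof (isR_scal (/ INR m) _ _ (is_series_geom _ Hq)) as Hs.
  eapply isR_ext; [|replace (w x m) with (/ INR m * / (1 - x * / INR m)); [exact Hs|]].
  - intros i. simpl. rewrite Rpow_mult_distr, pow_inv, Rinv_mult. ring.
  - unfold w. field. split; lra.
Qed.

Lemma E_series j : forall M, is_series (fun h => ecoef j h M * x ^ h) (E x j M).
Proof.
  induction j; intros M.
  - simpl. eapply isR_ext; [|apply (isR_delta 1)]. intros h. unfold ecoef. simpl Nat.add. rewrite Y0_val.
    destruct h; simpl; ring.
  - simpl E.
    eapply isR_ext; [|apply (is_series_sumR M (fun m h => sum_f_R0 (fun k => (x ^ k * / INR m ^ (S k)) * (ecoef j (h - k) (m - 1) * x ^ (h - k))) h))].
    2:{ intros m Hm. apply (isR_mult_nonneg (fun k => x ^ k * / INR m ^ (S k)) (fun n => ecoef j n (m - 1) * x ^ n)).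
        - intros n. apply Rmult_le_pos. apply pow_le; lra. left. apply Rinv_0_lt_compat, pow_lt. pose proof (INR_ge1 m ltac:(lia)); lra.
        - intros n. apply Rmult_le_pos. apply ecoef_nonneg. apply pow_le; lra.
        - apply geom_w; lia.
        - apply IHj. }
    intros h. unfold ecoef at 2.
    rewrite (Y_ext (S j) (S j + h) _ (fun p => match p with [] => 0 | a :: p' => sumR M (fun m => / INR m ^ (a + 0) * mzv_trunc p' (m - 1)) end)).
    2:{ intros p Hp. destruct p as [|a p']. apply comps_head in Hp. destruct Hp as [? [? [? _]]]. discriminate.
        simpl mzv_trunc. apply sumR_ext. intros; rewrite Nat.add_0_r; auto. }
    rewrite coef_rec. rewrite Rmult_comm, <- sumR_scal. apply sumR_ext. intros m Hm.
    rewrite sumf_to_sumR, <- sumR_scal. apply sumR_ext. intros a Ha.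
    replace (h - (a - 1))%nat with (h + 1 - a)%nat by lia. replace (S (a - 1)) with (a + 0)%nat by lia.
    replace (x ^ h) with (x ^ (a - 1) * x ^ (h + 1 - a)) by (rewrite <- pow_add; f_equal; lia). ring.
Qed.

Lemma L_series d M : (1 <= d)%nat -> is_series (fun h => acoef d h M * x ^ h) (Lf x d M).
Proof.
  intros Hd. destruct d as [|d']; [lia|]. unfold Lf, Ch.
  rewrite (sumR_ext M _ (fun m => / INR m * (w x m * E x d' (m - 1)))) by (intros; ring).
  eapply isR_ext; [|apply (is_series_sumR M (fun m h => / INR m * sum_f_R0 (fun k => (x ^ k * / INR m ^ (S k)) * (ecoef d' (h - k) (m - 1) * x ^ (h - k))) h))].
  2:{ intros m Hm. apply isR_scal. apply (isR_mult_nonneg (fun k => x ^ k * / INR m ^ (S k)) (fun n => ecoef d' n (m - 1) * x ^ n)).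
      - intros n. apply Rmult_le_pos. apply pow_le; lra. left. apply Rinv_0_lt_compat, pow_lt. pose proof (INR_ge1 m ltac:(lia)); lra.
      - intros n. apply Rmult_le_pos. apply ecoef_nonneg. apply pow_le; lra.
      - apply geom_w; lia.
      - apply E_series. }
  intros h. unfold acoef.
  rewrite (Y_ext (S d') (S d' + h) _ (fun p => match p with [] => 0 | a :: p' => sumR M (fun m => / INR m ^ (a + 1) * mzv_trunc p' (m - 1)) end)).
  2:{ intros p Hp. destruct p as [|a p']. apply comps_head in Hp. destruct Hp as [? [? [? _]]]. discriminate.
      simpl inc. simpl mzv_trunc. apply sumR_ext. intros; rewrite Nat.add_1_r; auto. }
  rewrite coef_rec. rewrite Rmult_comm, <- sumR_scal. apply sumR_ext. intros m Hm.
  rewrite sumf_to_sumR, <- sumR_scal, <- sumR_scal. apply sumR_ext. intros a Ha.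
  replace (h - (a - 1))%nat with (h + 1 - a)%nat by lia. replace (a + 1)%nat with (S (S (a - 1))) by lia.
  replace (x ^ h) with (x ^ (a - 1) * x ^ (h + 1 - a)) by (rewrite <- pow_add; f_equal; lia).
  change (INR m ^ S (S (a - 1))) with (INR m * INR m ^ S (a - 1)). rewrite Rinv_mult. ring.
Qed.

Lemma Z_series d M : is_series (fun h => mzv_trunc (cons (d + 1 + h)%nat nil) M * x ^ h) (Zs x d M).
Proof.
  unfold Zs. rewrite (sumR_ext M _ (fun n => / INR n ^ d * w x n)) by (intros; ring).
  eapply isR_ext; [|apply (is_series_sumR M (fun n h => / INR n ^ d * (x ^ h * / INR n ^ (S h))))].
  2:{ intros n Hn. apply isR_scal. apply geom_w; lia. }
  intros h. simpl mzv_trunc. rewrite Rmult_comm, <- sumR_scal. apply sumR_ext. intros n Hn.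
  replace (d + 1 + h)%nat with (d + S h)%nat by lia. rewrite pow_add, Rinv_mult. ring.
Qed.

End Ser.

Lemma mzv_trunc_mono ks M : mzv_trunc ks M <= mzv_trunc ks (S M).
Proof. destruct ks as [|k ks]; [simpl; lra|].
  change (mzv_trunc (k :: ks) ?N) with (sumR N (fun m => / INR m ^ k * mzv_trunc ks (m - 1))).
  change (sumR (S M) ?f) with (sumR M f + f (S M)). cbv beta.
  assert (0 <= / INR (S M) ^ k * mzv_trunc ks (S M - 1)).
  { apply Rmult_le_pos. left. apply Rinv_0_lt_compat, pow_lt. pose proof (INR_S_ge1 M); lra. apply mzv_trunc_nonneg. }
  lra. Qed.

Lemma mzv_of_lim ks (l : R) : is_lim_seq (mzv_trunc ks) l -> mzv ks = l.
Proof.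
  intros Hl. apply is_lim_seq_Reals in Hl. unfold mzv, lim_or0.
  destruct (excluded_middle_informative _) as [H|H].
  - destruct (constructive_indefinite_description _ H) as [l' Hl']. simpl. apply UL_sequence with (mzv_trunc ks); auto.
  - exfalso; apply H; exists l; auto.
Qed.

Lemma mzv_conv ks B : (forall M, mzv_trunc ks M <= B) -> is_lim_seq (mzv_trunc ks) (mzv ks).
Proof.
  intros HB. assert (Hex: ex_finite_lim_seq (mzv_trunc ks)).
  { apply ex_finite_lim_seq_incr with B; auto. apply mzv_trunc_mono. }
  destruct Hex as [l Hl]. rewrite (mzv_of_lim ks l Hl). auto.
Qed.

Lemma sum_list_lim {A} (l : list A) (f : A -> nat -> R) (g : A -> R) :
  (forall p, In p l -> is_lim_seq (f p) (g p)) ->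
  is_lim_seq (fun M => sum_list (map (fun p => f p M) l)) (sum_list (map g l)).
Proof.
  induction l as [|a l IH]; intros H; simpl.
  - apply is_lim_seq_const.
  - apply is_lim_seq_plus'.
    + apply H. left; auto.
    + apply IH. intros p Hp. apply H. right; auto.
Qed.

Section SF.
Variable d' : nat.
Let d := S d'.

Lemma half_ok : 0 <= /2 /\ /2 <= /2. Proof. lra. Qed.

Lemma acoef_bound h M : acoef d h M * (/2) ^ h <= 8.
Proof.
  pose proof (term_le _ _ (fun n => Rmult_le_pos _ _ (acoef_nonneg d n M) (pow_le (/2) n ltac:(lra)))
     (L_series (/2) ltac:(lra) ltac:(lra) d M ltac:(unfold d; lia)) h).
  pose proof (Lf_le8 (/2) ltac:(lra) ltac:(lra) d M ltac:(unfold d; lia)). lra.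
Qed.

Lemma zcoef_bound h M : mzv_trunc (cons (d + 1 + h)%nat nil) M * (/2) ^ h <= 4.
Proof.
  pose proof (term_le _ _ (fun n => Rmult_le_pos _ _ (mzv_trunc_nonneg _ M) (pow_le (/2) n ltac:(lra)))
     (Z_series (/2) ltac:(lra) ltac:(lra) d M) h).
  pose proof (Zs_le (/2) ltac:(lra) ltac:(lra) d M ltac:(unfold d; lia)). lra.
Qed.

Lemma pow_half_pos h : 0 < (/2) ^ h.
Proof. apply pow_lt; lra. Qed.

Lemma inc_conv h p : In p (comps d (d + h)) -> is_lim_seq (mzv_trunc (inc p)) (mzv (inc p)).
Proof.
  intros Hp. apply mzv_conv with (8 / (/2) ^ h). intros M.
  pose proof (acoef_bound h M). pose proof (pow_half_pos h).
  assert (mzv_trunc (inc p) M <= acoef d h M).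
  { unfold acoef, Y. apply (sum_list_map_single_le (fun p => mzv_trunc (inc p) M)); auto.
    intros; apply mzv_trunc_nonneg. }
  assert (mzv_trunc (inc p) M * (/2) ^ h <= acoef d h M * (/2) ^ h) by (apply Rmult_le_compat_r; lra).
  apply Rmult_le_reg_r with ((/2) ^ h); auto. unfold Rdiv. rewrite Rmult_assoc, Rinv_l by lra. lra.
Qed.

Lemma z_conv h : is_lim_seq (mzv_trunc (cons (d + 1 + h)%nat nil)) (mzv (cons (d + 1 + h)%nat nil)).
Proof.
  apply mzv_conv with (4 / (/2) ^ h). intros M.
  pose proof (zcoef_bound h M). pose proof (pow_half_pos h).
  apply Rmult_le_reg_r with ((/2) ^ h); auto. unfold Rdiv. rewrite Rmult_assoc, Rinv_l by lra. lra.
Qed.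

Definition alpha h := sum_list (map (fun p => mzv (inc p)) (comps d (d + h))).
Definition beta h := mzv (cons (d + 1 + h)%nat nil).

Lemma acoef_lim h : is_lim_seq (fun M => acoef d h M) (alpha h).
Proof. unfold acoef, Y, alpha. apply (sum_list_lim _ (fun p M => mzv_trunc (inc p) M)). apply inc_conv. Qed.

Lemma acoef_mono h M : acoef d h M <= acoef d h (S M).
Proof. unfold acoef, Y. apply sum_list_map_le. intros; apply mzv_trunc_mono. Qed.

Lemma alpha_nonneg h : 0 <= alpha h.
Proof. pose proof (is_lim_seq_incr_compare _ _ (acoef_lim h) (acoef_mono h) 0). pose proof (acoef_nonneg d h 0). lra. Qed.

Lemma beta_nonneg h : 0 <= beta h.
Proof. pose proof (is_lim_seq_incr_compare _ _ (z_conv h) (fun M => mzv_trunc_mono _ M) 0).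
  pose proof (mzv_trunc_nonneg (cons (d + 1 + h)%nat nil) 0). unfold beta. lra. Qed.

Lemma series_alpha x : 0 < x <= /2 -> exists S : R, is_series (fun h => alpha h * x ^ h) S /\ is_series (fun h => beta h * x ^ h) S.
Proof.
  intros Hx. destruct (Lf_cv x ltac:(lra) ltac:(lra) d ltac:(unfold d; lia)) as [Ll HL].
  destruct (Zs_cv x ltac:(lra) ltac:(lra) d ltac:(unfold d; lia)) as [Zl HZ].
  pose proof (conn_main x ltac:(lra) ltac:(lra) d Ll Zl ltac:(unfold d; lia) HL HZ) as HLZ.
  exists Zl. split.
  - rewrite <- HLZ. apply (series_MCT (fun N h => acoef d h N * x ^ h) _ (Lf x d)); auto.
    + intros N h. apply Rmult_le_pos. apply acoef_nonneg. apply pow_le; lra.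
    + intros N h. apply Rmult_le_compat_r. apply pow_le; lra. apply acoef_mono.
    + intros h. apply is_lim_seq_mult'. apply acoef_lim. apply is_lim_seq_const.
    + intros N. apply L_series; try lra. unfold d; lia.
  - apply (series_MCT (fun N h => mzv_trunc (cons (d + 1 + h)%nat nil) N * x ^ h) _ (Zs x d)); auto.
    + intros N h. apply Rmult_le_pos. apply mzv_trunc_nonneg. apply pow_le; lra.
    + intros N h. apply Rmult_le_compat_r. apply pow_le; lra. apply mzv_trunc_mono.
    + intros h. apply is_lim_seq_mult'. apply z_conv. apply is_lim_seq_const.
    + intros N. apply Z_series; lra.
Qed.

Lemma alpha_beta h : alpha h = beta h.
Proof.
  apply (pseries_unique alpha beta (fun x => Series (fun h => beta h * x ^ h))).
  - apply alpha_nonneg.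
  - apply beta_nonneg.
  - intros x Hx. destruct (series_alpha x Hx) as [S [H1 H2]]. rewrite (is_series_unique _ _ H2). auto.
  - intros x Hx. destruct (series_alpha x Hx) as [S [H1 H2]]. rewrite (is_series_unique _ _ H2). auto.
Qed.

End SF.

Lemma sum_formula m k : (1 <= m)%nat -> (m < k)%nat ->
  sum_list (map mzv (adm_comps m k)) = mzv (cons k nil).
Proof.
  intros Hm Hk. destruct m as [|d']; [lia|].
  pose proof (alpha_beta d' (k - S d' - 1)) as H. unfold alpha, beta in H.
  replace (S d' + 1 + (k - S d' - 1))%nat with k in H by lia.
  replace (S d' + (k - S d' - 1))%nat with (k - 1)%nat in H by lia.
  rewrite <- H. replace k with (S (k - 1)) at 1 by lia. rewrite adm_comps_inc, map_map. reflexivity.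
Qed.

End Analysis.

Theorem theorem1p1 (k n : nat) (hn : (1 <= n)%nat) (hk : (n < k)%nat) (t : R) :
  sum_list (map (zeta_t t) (adm_comps n k)) =
  sum_f_R0 (fun j => C (k - 1) j * t ^ j * (1 - t) ^ (n - 1 - j)) (n - 1)
    * mzv [k].
Proof.
  change (zeta_t t) with (Phi t mzv).
  rewrite LHS_reduce by lia.
  rewrite (sumR_ext n _ (fun m => Tc t (k - 1) n m * mzv [k])).
  - rewrite (sumR_ext n _ (fun m => mzv [k] * Tc t (k - 1) n m)) by (intros; ring).
    rewrite sumR_scal, poly_identity by lia. ring.
  - intros m Hm. rewrite Analysis.sum_formula by lia. unfold Tc. replace (k - 1 - m)%nat with (k - 1 - m)%nat by lia. reflexivity.
Qed.
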